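(* Let $G=(V,E)$ be a computation graph with $n=|V|$ vertices and fast-memory size $M$. Let $J^*_G$ be the minimum number of non-trivial I/Os over all valid evaluations of $G$. Let $\lambda_1(\tilde L)\le\lambda_2(\tilde L)\le\dots\le\lambda_n(\tilde L)$ be the eigenvalues of $\tilde L$ in increasing order. Then for every integer $k$ with $1\le k\le n$, $$J^*_G \;\geq\; \left\lfloor \frac{n}{k}\right\rfloor \sum_{i=1}^k \lambda_i(\tilde L) \;-\; 2kM.$$
   Context: A computation graph is a finite directed acyclic graph $G=(V,E)$. Each vertex is an operation producing a single element, and an edge $(u,v)$ means the result of $u$ is an operand of $v$. Sources are the inputs and sinks are the outputs. Execution model: a single processor has a fast memory holding at most $M$ elements and an unbounded slow memory. Every vertex is evaluated exactly once (no recomputation), in an order that is topological with respect to $G$. To evaluate $v$, all parents of $v$ must be in fast memory; a parent not present must be read from slow memory. The eviction policy is unconstrained, but a value that is evicted while still needed by a later vertex must first be written to slow memory. Only non-trivial I/O is counted. Inputs can be placed directly into fast memory at no cost, and outputs are reported immediately at no cost when computed. However, an input that is evicted while still needed must be written to slow memory. Each transfer of one element between fast and slow memory counts as one I/O. $\tilde L=\tilde D-\tilde A$ is the Laplacian of the weighted undirected graph $\tilde G$ on $V$. For each directed edge $(u,v)\in E$, $\tilde G$ contains the undirected edge $\{u,v\}$ with weight $1/d_{out}(u)$, where $d_{out}$ is out-degree in $G$. $\tilde A$ is its weighted adjacency matrix and $\tilde D$ its diagonal weighted-degree matrix. *)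

(* Defs.v *)
From HB Require Import structures.
From mathcomp Require Import all_boot all_order all_algebra.
From mathcomp Require Import reals.
Set Implicit Arguments. Unset Strict Implicit. Unset Printing Implicit Defensive.
Import Order.TTheory GRing.Theory Num.Theory.
Local Open Scope ring_scope.

(* A computation graph on the vertex set 'I_n: e u v means (u,v) \in E,
   i.e. the result of u is an operand of v. *)
Definition acyclic_graph (n : nat) (e : rel 'I_n) : Prop :=
  forall u v, e u v -> ~~ connect e v u.

Inductive op (n : nat) :=
| Compute of 'I_n   (* evaluate vertex v (for a source: place the input, free) *)
| Read of 'I_n
| Write of 'I_n
| Evict of 'I_n.

Record state (n : nat) := State {
  fast : {set 'I_n};
  slow : {set 'I_n};
  computed : {set 'I_n} }.

Definition parents (n : nat) (e : rel 'I_n) (v : 'I_n) : {set 'I_n} :=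
  [set u | e u v].

Definition still_needed (n : nat) (e : rel 'I_n) (C : {set 'I_n}) (v : 'I_n) : bool :=
  [exists w, e v w && (w \notin C)].

Definition step (n : nat) (e : rel 'I_n) (M : nat) (st : state n) (o : op n)
  : option (state n) :=
  let: State F Sl C := st in
  match o with
  | Compute v =>
      if [&& v \notin C, parents e v \subset F & (#|v |: F| <= M)%N]
      then Some (State (v |: F) Sl (v |: C)) else None
  | Read v =>
      if [&& v \in Sl, v \notin F & (#|v |: F| <= M)%N]
      then Some (State (v |: F) Sl C) else None
  | Write v =>
      if v \in F then Some (State F (v |: Sl) C) else None
  | Evict v =>
      if (v \in F) && ((v \in Sl) || ~~ still_needed e C v)
      then Some (State (F :\ v) Sl C) else None
  end.

Definition run (n : nat) (e : rel 'I_n) (M : nat) (s : seq (op n)) : option (state n) :=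
  foldl (fun ost o => obind (fun st => step e M st o) ost)
        (Some (State set0 set0 set0)) s.

(* A valid evaluation: every step is legal and every vertex gets evaluated
   (exactly once, since Compute requires v not yet computed). *)
Definition valid_evaluation (n : nat) (e : rel 'I_n) (M : nat) (s : seq (op n)) : bool :=
  if run e M s is Some st then computed st == setT else false.

Definition io_cost (n : nat) (s : seq (op n)) : nat :=
  count (fun o => match o with Read _ | Write _ => true | _ => false end) s.

Definition dout (n : nat) (e : rel 'I_n) (u : 'I_n) : nat := #|[set v | e u v]|.

Definition wadj (R : realType) (n : nat) (e : rel 'I_n) (u v : 'I_n) : R :=
  (if e u v then ((dout e u)%:R)^-1 else 0) + (if e v u then ((dout e v)%:R)^-1 else 0).

Definition laplacian (R : realType) (n : nat) (e : rel 'I_n) : 'M[R]_n :=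
  \matrix_(u, v) ((u == v)%:R * (\sum_w wadj R e u w) - wadj R e u v).

Definition sorted_eigenvalues (R : realType) (n : nat) (A : 'M[R]_n) (s : seq R) : Prop :=
  [/\ size s = n, sorted (<=%R) s & char_poly A = \prod_(x <- s) ('X - x%:P)].

(* Main.v *)
Require Import Defs.
From HB Require Import structures.
From mathcomp Require Import all_boot all_order all_algebra.
From mathcomp Require Import reals.
From mathcomp Require Import complex.
From mathcomp Require Import ring lra zify.
Import Order.TTheory GRing.Theory Num.Theory.
Local Open Scope ring_scope.

(* Proof outline:
   - PartA (spectral): Ky Fan type bound via the spectral theorem over R[i].
   - PartB (execution trace): segment the schedule into k blocks of
     consecutively computed vertices and count forced reads/writes.
   - PartD/E: relate the quadratic form of the Laplacian on block
     indicators to the cut sizes. *)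

Module PartA.
Local Open Scope ring_scope.
Local Open Scope sesquilinear_scope.
Lemma char_poly_similar (F : comNzRingType) n (Pi P D : 'M[F]_n) :
  Pi *m P = 1%:M -> char_poly (Pi *m D *m P) = char_poly D.
Proof.
move=> PiP.
have fPiP : map_mx (@polyC F) Pi *m map_mx (@polyC F) P = 1%:M by rewrite -map_mxM PiP map_mx1.
rewrite /char_poly.
have -> : char_poly_mx (Pi *m D *m P) = map_mx (@polyC F) Pi *m char_poly_mx D *m map_mx (@polyC F) P.
  rewrite /char_poly_mx map_mxM map_mxM mulmxBr mulmxBl.
  congr (_ - _).
  by rewrite scalar_mxC -mulmxA fPiP mulmx1.
by rewrite !det_mulmx mulrAC -det_mulmx fPiP det1 mul1r.
Qed.

Lemma rearr (R : realFieldType) n k (dr cr : 'I_n -> R) (lam : seq R) :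
  perm_eq (map dr (enum 'I_n)) lam -> sorted <=%R lam -> size lam = n ->
  (0 < k <= n)%N -> (forall i, 0 <= cr i <= 1) -> \sum_i cr i = k%:R ->
  \sum_(i < k) lam`_i <= \sum_i dr i * cr i.
Proof.
move=> pe so sz /andP[k0 kn] crb crs.
set t := lam`_k.-1.
have E : \sum_i dr i * cr i = \sum_i (dr i - t) * cr i + t * k%:R.
  rewrite -crs mulr_sumr -big_split /=; apply: eq_bigr => i _; ring.
have H1 : \sum_i Order.min (dr i - t) 0 <= \sum_i (dr i - t) * cr i.
  apply: ler_sum => i _; have /andP[c0 c1] := crb i.
  case: (leP 0 (dr i - t)) => h.
    exact: mulr_ge0.
  have : (dr i - t) * (1 - cr i) <= 0.
    apply: mulr_le0_ge0; [exact: ltW|by rewrite subr_ge0].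
  by rewrite mulrBr mulr1 subr_le0.
have H2 : \sum_i Order.min (dr i - t) 0 = \sum_(x <- lam) Order.min (x - t) 0.
  rewrite -(perm_big _ pe) /= big_map big_enum //.
rewrite (big_nth 0) sz in H2.
rewrite (big_cat_nat _ kn) //= in H2.
have H3 : \sum_(k <= i < n) Order.min (lam`_i - t) 0 = 0.
  rewrite big_nat_cond; apply: big1 => i /andP[/andP[ki iN] _].
  apply/min_idPr; rewrite subr_ge0 /t.
  apply: (sorted_leq_nth le_trans lexx) => //; rewrite ?inE ?sz //.
  - by rewrite (leq_trans _ kn) // ltn_predL.
  - by rewrite (leq_trans _ ki) // leq_pred.
have H4 : \sum_(0 <= i < k) Order.min (lam`_i - t) 0 = \sum_(0 <= i < k) (lam`_i - t).
  rewrite big_nat_cond [RHS]big_nat_cond; apply: eq_bigr => i /andP[/andP[_ ik] _].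
  apply/min_idPl; rewrite subr_le0 /t.
  apply: (sorted_leq_nth le_trans lexx) => //; rewrite ?inE ?sz //.
  - by rewrite (leq_trans ik).
  - by rewrite (leq_trans _ kn) // ltn_predL.
  - by rewrite -ltnS prednK.
rewrite H3 addr0 H4 big_split /= sumr_const_nat subn0 in H2.
rewrite E -(big_mkord xpredT (fun i => lam`_i)) mulr_natr.
move: H1; rewrite H2; lra.
Qed.

Section Spec.
Variable R : realType.
Local Notation C := (R[i]).
Local Notation rc := (real_complex R).

Lemma rc_conj (x : R) : (rc x)^* = rc x.
Proof. by apply: conj_Creal; apply/complex_realP; exists x. Qed.

Definition nsq (z : C) : R := complex.Re z ^+ 2 + complex.Im z ^+ 2.

Lemma mul_conj (z : C) : z * z^* = rc (nsq z).
Proof. case: z => a b; rewrite /nsq /=; simpc; congr (Complex _ _); ring. Qed.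

Lemma nsq_ge0 z : 0 <= nsq z.
Proof. by rewrite /nsq addr_ge0 // sqr_ge0. Qed.

Lemma nsq_rc x : nsq (rc x) = x ^+ 2.
Proof. by rewrite /nsq /= expr0n addr0. Qed.

Lemma Re_rc x : complex.Re (rc x) = x. Proof. by []. Qed.


Lemma spec_decomp n (L : 'M[R]_n) (lam : seq R) :
  L^T = L -> char_poly L = \prod_(x <- lam) ('X - x%:P) ->
  exists (P : 'M[C]_n) (dr : 'I_n -> R),
    [/\ P *m P^t* = 1%:M, P^t* *m P = 1%:M,
        map_mx rc L = P^t* *m diag_mx (\row_i rc (dr i)) *m P &
        perm_eq (map dr (enum 'I_n)) lam].
Proof.
move=> symL chL.
pose A := map_mx rc L.
have Aadj : A^t* = A.
  apply/matrixP => i j; rewrite !mxE rc_conj; congr rc.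
  by rewrite -[in RHS]symL mxE.
have Anorm : A \is normalmx by apply/normalmxP; rewrite Aadj.
have /orthomx_spectralP Aeq := Anorm.
set P := spectralmx A in Aeq; set d := spectral_diag A in Aeq.
have Pu : P \is unitarymx by exact: spectral_unitarymx.
have PPt : P *m P^t* = 1%:M by apply/unitarymxP.
have PtP : P^t* *m P = 1%:M by apply: mulmx1C.
have iP : invmx P = P^t* by rewrite invmx_unitary.
rewrite iP in Aeq.
have chA : char_poly A = \prod_(i < n) ('X - (d 0 i)%:P).
  rewrite Aeq char_poly_similar // char_poly_trig ?diag_mx_is_trig //.
  by apply: eq_bigr => i _; rewrite mxE eqxx mulr1n.
have chA2 : char_poly A = \prod_(x <- map rc lam) ('X - x%:P).
  rewrite /A -map_char_poly chL rmorph_prod big_map; apply: eq_bigr => x _.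
  by rewrite rmorphB /= map_polyX map_polyC.
have pe : perm_eq (map (fun i => d 0 i) (enum 'I_n)) (map rc lam).
  apply: prod_XsubC_eq; rewrite -chA2 chA big_map big_enum //.
pose dr i := complex.Re (d 0 i).
have dE : forall i, d 0 i = rc (dr i).
  move=> i; have : d 0 i \in map rc lam.
    by rewrite -(perm_mem pe); apply: map_f; rewrite mem_enum.
  by case/mapP => x _ e; rewrite /dr e.
exists P, dr; split => //.
  rewrite -/A Aeq; congr (_ *m diag_mx _ *m _); apply/rowP => i; rewrite !mxE; exact: dE.
have := perm_map (fun z : C => complex.Re z) pe.
by rewrite -!map_comp map_id_in.
Qed.

Lemma trmap m (M : 'M[R]_m) : rc (\tr M) = \tr (map_mx rc M).
Proof. by rewrite /mxtrace rmorph_sum; apply: eq_bigr => j _; rewrite mxE. Qed.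

Lemma kyfan n k (L : 'M[R]_n) (lam : seq R) (X : 'M[R]_(k, n)) :
  L^T = L -> size lam = n -> sorted <=%R lam ->
  char_poly L = \prod_(x <- lam) ('X - x%:P) ->
  X *m X^T = 1%:M -> (0 < k <= n)%N ->
  \sum_(i < k) lam`_i <= \tr (X *m L *m X^T).
Proof.
move=> symL sz so chL XX kn.
have [P [dr [PPt PtP Aeq pe]]] := @spec_decomp n L lam symL chL.
pose Xc := map_mx rc X.
pose Y := Xc *m P^t*.
have Xct : Xc^t* = map_mx rc (X^T).
  by apply/matrixP => i j; rewrite !mxE rc_conj.
have Yt : Y^t* = P *m Xc^t* by rewrite /Y trmx_mul map_mxM trmxCK.
have YYt : Y *m Y^t* = 1%:M.
  rewrite Yt /Y -mulmxA (mulmxA _ P) PtP mul1mx Xct -map_mxM XX.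
  by rewrite map_mx1.
pose cr i := \sum_j nsq (Y j i).
have key : \tr (X *m L *m X^T) = \sum_i dr i * cr i.
  apply: (@complexI R).
  transitivity (\tr (Y *m diag_mx (\row_i rc (dr i)) *m Y^t*)).
    rewrite trmap !map_mxM -Xct Aeq Yt /Y !mulmxA //.
  rewrite /mxtrace rmorph_sum.
  under [RHS]eq_bigr do rewrite /cr mulr_sumr rmorph_sum.
  rewrite [RHS]exchange_big /=; apply: eq_bigr => j _.
  rewrite mxE; apply: eq_bigr => i _.
  rewrite mul_mx_diag !mxE -mulrA [_ * _^*]mulrC mulrA mul_conj rmorphM /=.
  by rewrite mulrC.
have crs : \sum_i cr i = k%:R.
  rewrite /cr exchange_big /= -[k in RHS]card_ord -sumr_const.
  apply: eq_bigr => j _; apply: (@complexI R).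
  have := congr1 (fun M : 'M[C]_k => M j j) YYt; rewrite /= !mxE eqxx mulr1n => e.
  rewrite rmorph_sum rmorph1 -e; apply: eq_bigr => i _.
  by rewrite !mxE mul_conj.
have crb : forall i, 0 <= cr i <= 1.
  move=> i; have c0 : 0 <= cr i by apply: sumr_ge0 => j _; exact: nsq_ge0.
  pose Q := Y^t* *m Y.
  have QQ : Q *m Q = Q by rewrite /Q mulmxA -(mulmxA _ Y) YYt mulmx1.
  have Qii : Q i i = rc (cr i).
    rewrite /cr rmorph_sum !mxE; apply: eq_bigr => j _.
    by rewrite !mxE mulrC mul_conj.
  have Qc : forall l, Q l i = (Q i l)^*.
    move=> l; rewrite !mxE rmorph_sum; apply: eq_bigr => j _.
    by rewrite !mxE rmorphM /= conjCK mulrC.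
  have : cr i = \sum_l nsq (Q i l).
    apply: (@complexI R); rewrite -Qii -{1}QQ rmorph_sum mxE.
    by apply: eq_bigr => l _; rewrite Qc mul_conj.
  rewrite (bigD1 i) //= Qii nsq_rc => h.
  have : 0 <= \sum_(l | l != i) nsq (Q i l) by apply: sumr_ge0 => l _; exact: nsq_ge0.
  rewrite c0 /=; nra.
by rewrite key; apply: (@rearr _ n k dr cr lam pe so sz kn crb crs).
Qed.
End Spec.

End PartA.
Import PartA.

Module PartB.
Local Open Scope nat_scope.

Set Implicit Arguments. Unset Strict Implicit.
Section Trace.
Variables (n : nat) (e : rel 'I_n) (M : nat).

Definition inv (st : state n) :=
  [/\ (#|fast st| <= M)%N, fast st \subset computed st, slow st \subset computed st &
      forall u, u \in computed st -> still_needed e (computed st) u ->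
        (u \in fast st) || (u \in slow st)].

Lemma still_needed_mono (C C' : {set 'I_n}) u :
  C \subset C' -> still_needed e C' u -> still_needed e C u.
Proof.
move=> sub /existsP [w /andP [euw wC]]; apply/existsP; exists w.
by rewrite euw /=; apply: contra wC; apply: (subsetP sub).
Qed.

Lemma step_inv st o st' : step e M st o = Some st' -> inv st -> inv st'.
Proof.
case: st => F Sl C; case: o => v /=.
- case: ifP => // /and3P [vC pF card] [<-] [/= cF sF slC nd]; split => //=.
  + by rewrite setUS.
  + by apply: (subset_trans slC); apply: subsetUr.
  + move=> u; rewrite !inE => /orP [/eqP ->|uC] snd; first by rewrite eqxx.
    have := nd u uC (still_needed_mono (subsetUr [set v] C) snd).
    by case/orP => ->; rewrite ?orbT.
- case: ifP => // /and3P [vS vF card] [<-] [/= cF sF slC nd]; split => //=.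
  + by rewrite subUset sF andbT sub1set (subsetP slC).
  + move=> u uC snd; rewrite inE; have := nd u uC snd.
    by case/orP => ->; rewrite ?orbT.
- case: ifP => // vF [<-] [/= cF sF slC nd]; split => //=.
  + by rewrite subUset slC andbT sub1set (subsetP sF).
  + move=> u uC snd; rewrite inE; have := nd u uC snd.
    by case/orP => ->; rewrite ?orbT.
- case: ifP => // /andP [vF h] [<-] [/= cF sF slC nd]; split => //=.
  + by apply: leq_trans cF; apply: subset_leq_card; apply: subD1set.
  + by apply: subset_trans sF; apply: subD1set.
  + move=> u uC snd; rewrite !inE.
    case: (eqVneq u v) => [euv|uv] /=.
      by subst u; case/orP: h => // /negP /(_ snd).
    exact: nd.
Qed.

Lemma step_C st o st' u : step e M st o = Some st' ->
  (u \in computed st -> u \in computed st') /\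
  (u \in computed st' -> u \notin computed st -> o = Compute u).
Proof.
case: st => F Sl C; case: o => v /=.
- case: ifP => // /and3P [vC pF card] [<-] /=; rewrite !inE.
  split; first by move=> ->; rewrite orbT.
  by case/orP => [/eqP -> //|->].
- by case: ifP => // _ [<-] /=; split => // ->.
- by case: ifP => // _ [<-] /=; split => // ->.
- by case: ifP => // _ [<-] /=; split => // ->.
Qed.

Lemma step_compute st v st' : step e M st (Compute v) = Some st' ->
  v \notin computed st /\ parents e v \subset fast st.
Proof.
by case: st => F Sl C /=; case: ifP => // /and3P [vC pF card] _.
Qed.

Lemma step_F st o st' u : step e M st o = Some st' ->
  u \in fast st' -> u \notin fast st -> o = Compute u \/ o = Read u.
Proof.
case: st => F Sl C; case: o => v /=.
- case: ifP => // _ [<-] /=; rewrite !inE => /orP [/eqP -> |->] //; by left.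
- case: ifP => // _ [<-] /=; rewrite !inE => /orP [/eqP -> |->] //; by right.
- by case: ifP => // _ [<-] /= ->.
- by case: ifP => // _ [<-] /=; rewrite inE => /andP [_ ->].
Qed.

Lemma step_S st o st' u : step e M st o = Some st' ->
  u \in slow st' -> u \notin slow st -> o = Write u.
Proof.
case: st => F Sl C; case: o => v /=.
- by case: ifP => // _ [<-] /= ->.
- by case: ifP => // _ [<-] /= ->.
- case: ifP => // _ [<-] /=; rewrite !inE => /orP [/eqP -> |->] //.
- by case: ifP => // _ [<-] /= ->.
Qed.


Lemma first_change (P : nat -> bool) a c : (a <= c)%N -> ~~ P a -> P c ->
  exists i, [/\ (a <= i < c)%N, ~~ P i & P i.+1].
Proof.
elim: c => [|c IH] ac Pa Pc.
  by move: ac; rewrite leqn0 => /eqP h; subst a; rewrite Pc in Pa.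
case: (boolP (P c)) => Pc'.
  have ac' : (a <= c)%N.
    rewrite leq_eqVlt in ac; case/orP: ac => [/eqP h|//]; subst a.
    by rewrite Pc in Pa.
  have [i [/andP [h1 h2] h3 h4]] := IH ac' Pa Pc'.
  by exists i; split => //; apply/andP; split; lia.
exists c; split => //; apply/andP; split; last by lia.
rewrite leq_eqVlt in ac; case/orP: ac => [/eqP h|]; last by lia.
by subst a; rewrite Pc in Pa.
Qed.

Variables (s : seq (op n)) (o0 : op n).
Hypothesis hv : valid_evaluation e M s.

Let f := (fun ost o => obind (fun st => step e M st o) ost).

Definition stt i := odflt (State set0 set0 set0) (run e M (take i s)).
Definition ot i := nth o0 s i.
Local Notation N := (size s).

Lemma foldl_none l : foldl f None l = None.
Proof. by elim: l. Qed.

Lemma run_take i : run e M (take i s) = Some (stt i).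
Proof.
rewrite /stt; case E: (run e M (take i s)) => [st|] //.
move: hv; rewrite /valid_evaluation /run -(cat_take_drop i s) foldl_cat.
by rewrite -/(run e M (take i s)) E -/f foldl_none.
Qed.

Lemma stepi i : (i < N)%N -> step e M (stt i) (ot i) = Some (stt i.+1).
Proof.
move=> iN; have := run_take i.+1; rewrite (take_nth o0 iN) /run foldl_rcons.
by rewrite -/(run e M (take i s)) run_take.
Qed.

Lemma stt0 : stt 0 = State set0 set0 set0.
Proof. by rewrite /stt take0. Qed.

Lemma sttN : computed (stt N) = setT.
Proof.
move: hv; rewrite /valid_evaluation /stt take_size.
by case: (run e M s) => // st /eqP.
Qed.

Lemma inv_i i : (i <= N)%N -> inv (stt i).
Proof.
elim: i => [|i IH] iN.
  by rewrite stt0; split => //=; rewrite ?cards0 ?sub0set // => u; rewrite inE.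
exact: step_inv (stepi iN) (IH (ltnW iN)).
Qed.

Lemma C_step i u : (i < N)%N -> u \in computed (stt i) -> u \in computed (stt i.+1).
Proof. by move=> iN; case: (step_C u (stepi iN)). Qed.

Lemma C_mono i j u : (i <= j)%N -> (j <= N)%N -> u \in computed (stt i) -> u \in computed (stt j).
Proof.
move=> ij jN h; elim: j ij jN => [|j IH] ij jN.
  by move: ij; rewrite leqn0 => /eqP <-.
rewrite leq_eqVlt in ij; case/orP: ij => [/eqP <- //|ij].
by apply: C_step => //; apply: IH => //; apply: ltnW.
Qed.


Lemma find_write a c u : (a <= c)%N -> (c <= N)%N -> u \notin computed (stt a) ->
  u \in slow (stt c) -> exists i, (a <= i < c)%N /\ ot i = Write u.
Proof.
move=> ac cN uC uS.
have uSa : u \notin slow (stt a).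
  have [_ _ slC _] := inv_i (leq_trans ac cN).
  by apply: contra uC; apply: (subsetP slC).
have [i [/andP [ai ic] h1 h2]] := first_change (P:=fun t => u \in slow (stt t)) ac uSa uS.
exists i; split; first by rewrite ai ic.
exact: step_S (stepi (leq_trans ic cN)) h2 h1.
Qed.

Lemma find_compute a c u : (a <= c)%N -> (c <= N)%N -> u \notin computed (stt a) ->
  u \in computed (stt c) -> exists i, (a <= i < c)%N /\ ot i = Compute u.
Proof.
move=> ac cN uC uC'.
have [i [/andP [ai ic] h1 h2]] := first_change (P:=fun t => u \in computed (stt t)) ac uC uC'.
exists i; split; first by rewrite ai ic.
by case: (step_C u (stepi (leq_trans ic cN))) => _; apply.
Qed.

Lemma find_read a i u : (a <= i)%N -> (i <= N)%N -> u \in computed (stt a) ->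
  u \in fast (stt i) -> u \in fast (stt a) \/ exists r, (a <= r < i)%N /\ ot r = Read u.
Proof.
move=> ai iN uC uF.
case: (boolP (u \in fast (stt a))) => uFa; first by left.
right.
have [r [/andP [ar ri] h1 h2]] := first_change (P:=fun t => u \in fast (stt t)) ai uFa uF.
exists r; split; first by rewrite ar ri.
have rN := leq_trans ri iN.
case: (step_F (stepi rN) h2 h1) => // oc.
have := stepi rN; rewrite oc => /step_compute [uCr _].
by move: uCr; rewrite (C_mono ar (ltnW rN) uC).
Qed.


Definition isR (o : op n) := if o is Read _ then true else false.
Definition isW (o : op n) := if o is Write _ then true else false.
Definition isIO (o : op n) := match o with Read _ | Write _ => true | _ => false end.
Definition opv (o : op n) : 'I_n :=
  match o with Compute v | Read v | Write v | Evict v => v end.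

Definition RS (a c : nat) := (fun i : 'I_N => opv (ot i)) @: [set i : 'I_N | (a <= i < c)%N && isR (ot i)].
Definition WS (a c : nat) := (fun i : 'I_N => opv (ot i)) @: [set i : 'I_N | (a <= i < c)%N && isW (ot i)].

Lemma card_setP (T : finType) (P : pred T) : #|[set i | P i]| = (\sum_i (P i : nat))%N.
Proof. by rewrite -sum1dep_card big_mkcond /=; apply: eq_bigr => i _; case: (P i). Qed.

Lemma card_RSWS a c : (#|RS a c| + #|WS a c| <= \sum_(i < N) ((a <= i < c)%N && isIO (ot i)))%N.
Proof.
apply: leq_trans (leq_add (leq_imset_card _ _) (leq_imset_card _ _)) _.
rewrite !card_setP -big_split /=; apply: leq_sum => i _.
by case: (ot i) => v; case: (a <= i < c)%N.
Qed.

Lemma mem_RS a c r u : (a <= r < c)%N -> (r < N)%N -> ot r = Read u -> u \in RS a c.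
Proof.
move=> h rN o; apply/imsetP; exists (Ordinal rN); last by rewrite /= o.
by rewrite inE /= h o.
Qed.

Lemma mem_WS a c r u : (a <= r < c)%N -> (r < N)%N -> ot r = Write u -> u \in WS a c.
Proof.
move=> h rN o; apply/imsetP; exists (Ordinal rN); last by rewrite /= o.
by rewrite inE /= h o.
Qed.

Lemma io_cost_sum : io_cost s = (\sum_(i < N) isIO (ot i))%N.
Proof.
rewrite /io_cost /ot; elim: s => [|x l IH]; first by rewrite big_ord0.
rewrite /= big_ord_recl /= IH; congr (_ + _)%N.
Qed.


Variables (k : nat) (b : 'I_n -> nat) (T : nat -> nat).
Hypotheses (hT0 : T 0 = 0) (hTk : T k = N)
  (hTm : forall j, (j < k)%N -> (T j <= T j.+1)%N)
  (hTC : forall j, (j <= k)%N -> computed (stt (T j)) = [set u | (b u < j)%N])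
  (hb : forall u, (b u < k)%N).

Lemma T_mono i j : (i <= j)%N -> (j <= k)%N -> (T i <= T j)%N.
Proof.
move=> ij jk; elim: j ij jk => [|j IH] ij jk; first by move: ij; rewrite leqn0 => /eqP ->.
rewrite leq_eqVlt in ij; case/orP: ij => [/eqP -> //|ij].
exact: leq_trans (IH ij (ltnW jk)) (hTm jk).
Qed.

Lemma T_le_N j : (j <= k)%N -> (T j <= N)%N.
Proof. by move=> jk; rewrite -hTk; apply: T_mono. Qed.

Lemma inC j u : (j <= k)%N -> (u \in computed (stt (T j))) = (b u < j)%N.
Proof. by move=> jk; rewrite hTC // inE. Qed.

Lemma edge_fwd u w : e u w -> (b u <= b w)%N.
Proof.
move=> euw; rewrite leqNgt; apply/negP => lt.
set j := (b w).+1.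
have jk : (j <= k)%N by apply: leq_trans lt (ltnW (hb u)).
have wC : w \in computed (stt (T j)) by rewrite inC.
have w0 : w \notin computed (stt (T 0)) by rewrite inC.
have [i [/andP [_ iT] oc]] := find_compute (T_mono (leq0n j) jk) (T_le_N jk) w0 wC.
have iN : (i < N)%N := leq_trans iT (T_le_N jk).
have := stepi iN; rewrite oc => /step_compute [_ pF].
have uF : u \in fast (stt i) by apply: (subsetP pF); rewrite inE.
have [_ FC _ _] := inv_i (ltnW iN).
have uC : u \in computed (stt (T j)).
  by apply: (C_mono (ltnW iT) (T_le_N jk)); apply: (subsetP FC).
move: uC; rewrite inC // /j; lia.
Qed.

Definition outS j := [set u | (b u == j) && [exists v, (b v != j) && e u v]].
Definition inS j := [set v | (b v != j) && [exists u, (b u == j) && e v u]].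

Lemma out_sub j : (j < k)%N ->
  outS j \subset fast (stt (T j.+1)) :|: WS (T j) (T j.+1).
Proof.
move=> jk; apply/subsetP => u; rewrite inE => /andP [/eqP buj /existsP [v /andP [bvj euv]]].
have bvj' : (j < b v)%N by rewrite ltn_neqAle eq_sym bvj -buj edge_fwd.
have cN := T_le_N jk.
have [cF FC slC nd] := inv_i cN.
have uC : u \in computed (stt (T j.+1)) by rewrite inC // buj.
have sn : still_needed e (computed (stt (T j.+1))) u.
  by apply/existsP; exists v; rewrite euv inC // ltnNge /= -ltnS ltnS bvj'.
rewrite inE; case/orP: (nd u uC sn) => [->//|uS]; apply/orP; right.
have uCa : u \notin computed (stt (T j)) by rewrite inC ?(ltnW jk) // buj ltnn.
have [i [h oi]] := find_write (hTm jk) cN uCa uS.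
apply: (mem_WS h _ oi); case/andP: h => _ h; exact: leq_trans h cN.
Qed.

Lemma in_sub j : (j < k)%N ->
  inS j \subset fast (stt (T j)) :|: RS (T j) (T j.+1).
Proof.
move=> jk; apply/subsetP => v; rewrite inE => /andP [bvj /existsP [u /andP [/eqP buj evu]]].
have bvj' : (b v < j)%N by rewrite ltn_neqAle bvj -buj edge_fwd.
have cN := T_le_N jk.
have aN := T_le_N (ltnW jk).
have vC : v \in computed (stt (T j)) by rewrite inC // ltnW.
have uCa : u \notin computed (stt (T j)) by rewrite inC ?(ltnW jk) // buj ltnn.
have uCc : u \in computed (stt (T j.+1)) by rewrite inC // buj.
have [i [/andP [ai ic] oi]] := find_compute (hTm jk) cN uCa uCc.
have iN : (i < N)%N := leq_trans ic cN.
have := stepi iN; rewrite oi => /step_compute [_ pF].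
have vF : v \in fast (stt i) by apply: (subsetP pF); rewrite inE.
rewrite inE; case: (find_read ai (ltnW iN) vC vF) => [->//|[r [/andP [ar ri] orr]]].
apply/orP; right; apply: (mem_RS _ _ orr).
  by rewrite ar (ltn_trans ri ic).
exact: ltn_trans ri iN.
Qed.


Lemma seg_sum i m : (m <= k)%N ->
  (\sum_(j < m) ((T j <= i < T j.+1)%N : nat))%N = ((T 0 <= i < T m)%N : nat).
Proof.
elim: m => [|m IH] mk; first by rewrite big_ord0; case: (leqP (T 0) i) => //= h; rewrite ltnNge h.
rewrite big_ord_recr /= IH ?(ltnW mk) //.
have h1 := T_mono (leq0n m) (ltnW mk).
have h2 := hTm mk.
case: (leqP (T 0) i) => a1; case: (leqP (T m) i) => a2;
  case: (leqP (T m.+1) i) => a3 //=; lia.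
Qed.

Lemma total_bound : (\sum_(j < k) (#|outS j| + #|inS j|) <= io_cost s + 2 * k * M)%N.
Proof.
have step1 : forall j : 'I_k, (#|outS j| + #|inS j| <= 2 * M +
     \sum_(i < N) ((T j <= i < T j.+1)%N && isIO (ot i)))%N.
  move=> j; have jk := ltn_ord j.
  have o1 := subset_leq_card (out_sub jk).
  have i1 := subset_leq_card (in_sub jk).
  have o2 := (leq_card_setU (fast (stt (T j.+1))) (WS (T j) (T j.+1))).1.
  have i2 := (leq_card_setU (fast (stt (T j))) (RS (T j) (T j.+1))).1.
  have [c1 _ _ _] := inv_i (T_le_N jk).
  have [c2 _ _ _] := inv_i (T_le_N (ltnW jk)).
  have := card_RSWS (T j) (T j.+1).
  move=> h.
  apply: leq_trans (leq_add o1 i1) _.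
  apply: leq_trans (leq_add o2 i2) _.
  rewrite addnACA [(#|WS _ _| + _)%N]addnC.
  by apply: leq_add => //; rewrite mul2n -addnn; exact: leq_add.
have H : (\sum_(j < k) (#|outS j| + #|inS j|) <= \sum_(j < k) (2 * M +
     \sum_(i < N) ((T j <= i < T j.+1)%N && isIO (ot i))))%N.
  by apply: leq_sum => j _; exact: step1.
apply: leq_trans H _.
rewrite big_split /= sum_nat_const card_ord exchange_big /=.
rewrite io_cost_sum addnC -mulnA mulnCA; apply: leq_add => //.
apply: leq_sum => i _.
have -> : (\sum_(j < k) ((T j <= i < T j.+1)%N && isIO (ot i)) =
            ((T 0 <= i < T k)%N : nat) * isIO (ot i))%N.
  rewrite -seg_sum // big_distrl /=; apply: eq_bigr => j _.
  by rewrite mulnb.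
by rewrite hT0 hTk ltn_ord /= mul1n.
Qed.

End Trace.

Lemma mono_upto (T : nat -> nat) k : (forall j, (j < k)%N -> (T j <= T j.+1)%N) ->
  forall i j, (i <= j)%N -> (j <= k)%N -> (T i <= T j)%N.
Proof.
move=> hTm i j ij jk; elim: j ij jk => [|j IH] ij jk; first by move: ij; rewrite leqn0 => /eqP ->.
rewrite leq_eqVlt in ij; case/orP: ij => [/eqP -> //|ij].
exact: leq_trans (IH ij (ltnW jk)) (hTm _ jk).
Qed.

Section Construct.
Variables (n : nat) (e : rel 'I_n) (M : nat) (s : seq (op n)) (o0 : op n).
Hypothesis hv : valid_evaluation e M s.
Local Notation N := (size s).
Local Notation Cc i := (computed (stt e M s i)).
Definition g i := #|Cc i|.

Lemma g0 : g 0 = 0%N.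
Proof. by rewrite /g stt0 cards0. Qed.

Lemma gN : g N = n.
Proof. by rewrite /g sttN // cardsT card_ord. Qed.

Lemma g_mono i j : (i <= j)%N -> (j <= N)%N -> (g i <= g j)%N.
Proof.
move=> ij jN; apply: subset_leq_card; apply/subsetP => u.
exact: (C_mono o0 hv ij jN).
Qed.

Lemma g_step i : (i < N)%N -> (g i.+1 <= (g i).+1)%N.
Proof.
move=> iN; rewrite /g.
have sub : Cc i.+1 \subset opv (ot s o0 i) |: Cc i.
  apply/subsetP => u uC; rewrite in_setU1; apply/orP.
  case: (boolP (u \in Cc i)) => uC'; first by right.
  left; have [_ h] := step_C u (stepi o0 hv iN).
  by rewrite (h uC uC') /= eqxx.
by apply: leq_trans (subset_leq_card sub) _; rewrite cardsU1; case: (_ \notin _).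
Qed.

Definition tau m := find (fun i => (m <= g i)%N) (iota 0 N.+1).

Lemma tau_le m : (m <= n)%N -> (tau m <= N)%N /\ (m <= g (tau m))%N.
Proof.
move=> mn.
have hs : has (fun i => (m <= g i)%N) (iota 0 N.+1).
  by apply/hasP; exists N; [rewrite mem_iota /= add0n ltnSn | rewrite gN].
have lt := hs; rewrite has_find size_iota in lt.
split; first by rewrite -ltnS.
by have := nth_find 0 hs; rewrite nth_iota // add0n.
Qed.

Lemma tau_before m i : (i < tau m)%N -> (g i < m)%N.
Proof.
move=> it.
have iN : (i < N.+1)%N.
  apply: leq_trans it _; rewrite /tau; have := find_size (fun i => (m <= g i)%N) (iota 0 N.+1).
  by rewrite size_iota.
have := before_find 0 it; rewrite nth_iota // add0n.
by rewrite ltnNge => ->.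
Qed.

Lemma tau_exact m : (m <= n)%N -> g (tau m) = m.
Proof.
move=> mn; have [tN mg] := tau_le mn.
case E: (tau m) => [|t].
  by move: mg; rewrite E g0 leqn0 => /eqP ->.
have h1 : (g t < m)%N by apply: tau_before; rewrite E.
have h2 : (g t.+1 <= (g t).+1)%N by apply: g_step; rewrite -E.
apply/eqP; rewrite eqn_leq -E mg andbT E; exact: leq_trans h2 h1.
Qed.

Lemma tau_mono m m' : (m <= m')%N -> (m' <= n)%N -> (tau m <= tau m')%N.
Proof.
move=> mm' m'n; rewrite leqNgt; apply/negP => lt.
have := tau_before lt; have [_ h] := tau_le m'n.
by rewrite ltnNge (leq_trans mm' h).
Qed.

Lemma tau0 : tau 0 = 0%N.
Proof. by []. Qed.


Variable k : nat.
Hypothesis hk : (0 < k <= n)%N.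
Local Notation q := (n %/ k).
Definition Tf j := if (j < k)%N then tau (j * q) else N.
Definition bf u := find (fun j => u \in Cc (Tf j.+1)) (iota 0 k).

Lemma kq_le : (k * q <= n)%N.
Proof. by rewrite mulnC leq_trunc_div. Qed.

Lemma Tf0 : Tf 0 = 0%N.
Proof. by case/andP: hk => k0 _; rewrite /Tf k0 mul0n tau0. Qed.

Lemma Tfk : Tf k = N.
Proof. by rewrite /Tf ltnn. Qed.

Lemma Tfm j : (j < k)%N -> (Tf j <= Tf j.+1)%N.
Proof.
move=> jk; have jqn : (j * q <= n)%N.
  apply: leq_trans kq_le; apply: leq_mul => //; exact: ltnW.
rewrite /Tf jk; case: ifP => h.
  apply: tau_mono; first by apply: leq_mul.
  apply: leq_trans kq_le; apply: leq_mul => //; exact: ltnW.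
by case: (tau_le jqn).
Qed.

Lemma Tf_le j : (j <= k)%N -> (Tf j <= N)%N.
Proof. by move=> jk; rewrite -Tfk; apply: (mono_upto Tfm). Qed.

Lemma bf_lt u : (bf u < k)%N.
Proof.
case/andP: hk => k0 _.
have hs : has (fun j => u \in Cc (Tf j.+1)) (iota 0 k).
  apply/hasP; exists k.-1; first by rewrite mem_iota /= add0n prednK.
  by rewrite prednK // Tfk sttN // inE.
by have := hs; rewrite has_find size_iota.
Qed.

Lemma hTC j : (j <= k)%N -> Cc (Tf j) = [set u | (bf u < j)%N].
Proof.
move=> jk; apply/setP => u; rewrite inE; apply/idP/idP.
  case: j jk => [|j] jk.
    by rewrite Tf0 stt0 inE.
  move=> uC; rewrite ltnS leqNgt; apply/negP => lt.
  have := before_find 0 lt; rewrite nth_iota // add0n uC //.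
move=> lt.
have hs : has (fun j => u \in Cc (Tf j.+1)) (iota 0 k).
  by rewrite has_find size_iota bf_lt.
have := nth_find 0 hs; rewrite -/(bf u) nth_iota ?bf_lt // add0n => h.
exact: (C_mono o0 hv (mono_upto Tfm lt jk) (Tf_le jk) h).
Qed.

Lemma gTf j : (j < k)%N -> g (Tf j) = (j * q)%N.
Proof.
move=> jk; rewrite /Tf jk tau_exact //.
apply: leq_trans kq_le; apply: leq_mul => //; exact: ltnW.
Qed.

Lemma block_size j : (j < k)%N -> (q <= #|[set u | bf u == j]|)%N.
Proof.
move=> jk.
have -> : [set u | bf u == j] = Cc (Tf j.+1) :\: Cc (Tf j).
  apply/setP => u; rewrite !inE (hTC (ltnW jk)) (hTC jk) !inE.
  by rewrite ltnS -leqNgt -eqn_leq eq_sym.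
have sub : Cc (Tf j) \subset Cc (Tf j.+1).
  by rewrite (hTC (ltnW jk)) (hTC jk); apply/subsetP => u; rewrite !inE => /ltnW.
rewrite cardsD (setIidPr sub).
have h1 : #|Cc (Tf j)| = (j * q)%N by rewrite -/(g _) gTf.
have h2 : (j.+1 * q <= #|Cc (Tf j.+1)|)%N.
  rewrite -/(g _); case: (ltnP j.+1 k) => h.
    by rewrite gTf.
  have -> : j.+1 = k by apply/eqP; rewrite eqn_leq jk h.
  by rewrite /Tf ltnn gN kq_le.
rewrite h1; move: h2; rewrite mulSn; lia.
Qed.

End Construct.

Lemma combB n (e : rel 'I_n) M (s : seq (op n)) k (o0 : op n) :
  valid_evaluation e M s -> (0 < k <= n)%N ->
  exists b : 'I_n -> nat, [/\ forall u, (b u < k)%N,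
    forall j, (j < k)%N -> (n %/ k <= #|[set u | b u == j]|)%N &
    (\sum_(j < k) (#|outS e b j| + #|inS e b j|) <= io_cost s + 2 * k * M)%N].
Proof.
move=> hv hk.
exists (bf e M s k); split.
- exact: bf_lt.
- move=> j jk; exact: block_size.
apply: (total_bound o0 hv (T := Tf e M s k)).
- exact: Tf0.
- exact: Tfk.
- exact: Tfm.
- move=> j jk; exact: hTC.
- exact: bf_lt.
Qed.

End PartB.
Import PartB.
Unset Implicit Arguments.
Set Strict Implicit.


Section PartD.
Variables (R : realType) (n : nat) (e : rel 'I_n).

Lemma wadj_sym u v : wadj R e u v = wadj R e v u.
Proof. by rewrite /wadj addrC. Qed.

Lemma wadj_ge0 u v : 0 <= wadj R e u v.
Proof. by rewrite /wadj addr_ge0 //; case: ifP => _; rewrite ?invr_ge0 ?ler0n. Qed.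

Lemma lap_sym : (laplacian R e)^T = laplacian R e.
Proof.
apply/matrixP => u v; rewrite !mxE wadj_sym; case: (eqVneq u v) => [->//|uv].
by rewrite !mul0r.
Qed.

Lemma one_edge x (P : pred 'I_n) :
  \sum_y (if P y then (if e x y then ((dout e x)%:R)^-1 else 0) else 0)
    <= ([exists y, P y && e x y] : nat)%:R :> R.
Proof.
case: (boolP [exists y, P y && e x y]) => [/existsP [y0 /andP [Py0 exy0]]|/existsPn h] /=.
  apply: (@le_trans _ _ (\sum_y (if e x y then ((dout e x)%:R)^-1 else 0 : R))).
    apply: ler_sum => y _; case: (P y) => //; case: (e x y) => //; by rewrite invr_ge0 ler0n.
  rewrite (eq_bigr (fun y => ((dout e x)%:R)^-1 * ((e x y : nat)%:R : R))); last first.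
    by move=> y _; case: (e x y); rewrite ?mulr1 ?mulr0.
  rewrite -mulr_sumr -natr_sum -card_setP -/(dout e x).
  have d0 : (0 < dout e x)%N.
    by rewrite /dout card_gt0; apply/set0Pn; exists y0; rewrite inE.
  by rewrite mulVf // pnatr_eq0 -lt0n.
rewrite big1 // => y _; have := h y; case: (P y) => //=; by move/negPf ->.
Qed.

Definition cut (b : 'I_n -> nat) j :=
  \sum_u \sum_v (if (b u == j) && (b v != j) then wadj R e u v else 0).

Lemma cut_ge0 b j : 0 <= cut b j.
Proof. by apply: sumr_ge0 => u _; apply: sumr_ge0 => v _; case: ifP => // _; exact: wadj_ge0. Qed.

Lemma cut_le b j : cut b j <= (#|outS e b j| + #|inS e b j|)%:R.
Proof.
have E : cut b j =
   \sum_u (if b u == j then \sum_v (if b v != j then (if e u v then ((dout e u)%:R)^-1 else 0) else 0) else 0)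
 + \sum_v (if b v != j then \sum_u (if b u == j then (if e v u then ((dout e v)%:R)^-1 else 0) else 0) else 0).
  rewrite /cut.
  have -> : \sum_v (if b v != j then \sum_u (if b u == j then (if e v u then ((dout e v)%:R)^-1 else 0) else 0) else 0 : R)
      = \sum_u \sum_v (if (b u == j) && (b v != j) then (if e v u then ((dout e v)%:R)^-1 else 0) else 0).
    rewrite exchange_big /=; apply: eq_bigr => v _; case: (b v != j).
      by apply: eq_bigr => u _; rewrite andbT.
    by rewrite big1 // => u _; rewrite andbF.
  rewrite -big_split /=; apply: eq_bigr => u _.
  have -> : (if b u == j then \sum_v (if b v != j then (if e u v then ((dout e u)%:R)^-1 else 0) else 0) else 0 : R)
      = \sum_v (if (b u == j) && (b v != j) then (if e u v then ((dout e u)%:R)^-1 else 0) else 0).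
    by case: (b u == j) => //; rewrite big1.
  rewrite -big_split /=; apply: eq_bigr => v _.
  by case: (_ && _); rewrite ?addr0 // /wadj.
rewrite E natrD; apply: lerD.
  rewrite card_setP natr_sum; apply: ler_sum => u _.
  case: (b u == j) => /=; last by [].
  exact: (one_edge u (fun v => b v != j)).
rewrite card_setP natr_sum; apply: ler_sum => v _.
case: (b v != j) => /=; last by [].
exact: (one_edge v (fun u => b u == j)).
Qed.

End PartD.


Section PartE.
Variables (R : realType) (n : nat) (e : rel 'I_n) (k : nat) (b : 'I_n -> nat).
Hypothesis hk : (0 < k <= n)%N.
Hypothesis hsz : forall j, (j < k)%N -> (n %/ k <= #|[set u | b u == j]|)%N.

Let c (j : 'I_k) : R := (#|[set u | b u == j]|)%:R.
Let a (j : 'I_k) : R := (Num.sqrt (c j))^-1.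

Lemma c_gt0 j : 0 < c j.
Proof.
rewrite ltr0n; apply: (leq_trans _ (hsz j (ltn_ord j))).
by case/andP: hk => k0 kn; rewrite divn_gt0.
Qed.

Lemma aa j : a j * a j = (c j)^-1.
Proof. by rewrite -invfM -expr2 sqr_sqrtr // ltW // c_gt0. Qed.

Lemma sum_ind (j : 'I_k) (x : R) :
  \sum_u (if b u == j then x else 0) = x * c j.
Proof.
rewrite (eq_bigr (fun u => x * (((b u == j) : nat)%:R))); last first.
  by move=> u _; case: (b u == j); rewrite ?mulr1 ?mulr0.
by rewrite -mulr_sumr -natr_sum -card_setP.
Qed.

Let X : 'M[R]_(k, n) := \matrix_(j, u) (if b u == j then a j else 0).

Lemma XX : X *m X^T = 1%:M.
Proof.
apply/matrixP => j j'; rewrite !mxE.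
under eq_bigr do rewrite !mxE.
case: (eqVneq j j') => [<-|jj'].
  rewrite (eq_bigr (fun u => if b u == j then a j * a j else 0)); last first.
    by move=> u _; case: (b u == j); rewrite ?mulr0.
  by rewrite sum_ind aa mulVf ?gt_eqF ?c_gt0.
rewrite big1 // => u _; case: (eqVneq (b u) j) => [buj|]; last by rewrite mul0r.
have : b u != j' by rewrite buj; apply: contra jj' => /eqP h; apply/eqP/val_inj.
by move/negPf ->; rewrite mulr0.
Qed.


Lemma XLX (j : 'I_k) : (X *m laplacian R e *m X^T) j j = (c j)^-1 * cut R n e b j.
Proof.
rewrite mxE /cut mulr_sumr.
under eq_bigr do rewrite !mxE mulr_suml.
rewrite exchange_big /=; apply: eq_bigr => u _.
case: (eqVneq (b u) j) => [buj|buj]; last first.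
  rewrite !big1 ?mulr0 // => v _; rewrite ?mxE (negPf buj) //= mul0r mul0r //.
rewrite /X mxE buj eqxx /=.
have E1 : \sum_v ((if b v == j then (u == v)%:R * (\sum_w wadj R e u w) else 0) : R) =
          \sum_w wadj R e u w.
  rewrite [LHS](bigD1 u) //= buj !eqxx mul1r [X in _ + X = _]big1 ?addr0 // => v vu.
  by rewrite eq_sym in vu; rewrite (negPf vu) mul0r; case: (_ == _).
have E2 : \sum_w wadj R e u w = \sum_v (if b v == j then wadj R e u v else 0)
                             + \sum_v (if b v != j then wadj R e u v else 0).
  by rewrite -big_split /=; apply: eq_bigr => v _; case: (b v == j); rewrite ?addr0 ?add0r.
transitivity (a j * a j * \sum_v (if b v == j then laplacian R e u v else 0)).
  rewrite mulr_sumr; apply: eq_bigr => v _; rewrite !mxE.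
  by case: (b v == j); rewrite ?mulr0 // mulrAC.
rewrite aa; congr (_ * _).
have -> : \sum_v (if b v == j then laplacian R e u v else 0) =
   \sum_v (if b v == j then (u == v)%:R * (\sum_w wadj R e u w) else 0)
 - \sum_v (if b v == j then wadj R e u v else 0).
  rewrite -sumrB; apply: eq_bigr => v _; rewrite mxE; case: (b v == j) => //.
  by rewrite subr0.
rewrite E1 E2 addrAC subrr add0r; apply: eq_bigr => v _.
by case: (b v != j).
Qed.


Lemma spec_bound lam : sorted_eigenvalues (laplacian R e) lam ->
  (n %/ k)%:R * (\sum_(i < k) lam`_i) <= \sum_(j < k) cut R n e b j.
Proof.
case=> sz so ch.
have := kyfan R n k (laplacian R e) lam X (lap_sym R n e) sz so ch XX hk.
have E : \tr (X *m laplacian R e *m X^T) = \sum_j (c j)^-1 * cut R n e b j.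
  by rewrite /mxtrace; apply: eq_bigr => j _; exact: XLX.
rewrite E => h.
apply: le_trans (ler_wpM2l (ler0n _ _) h) _.
rewrite mulr_sumr; apply: ler_sum => j _.
have cj := c_gt0 j.
have x0 : 0 <= (c j)^-1 by rewrite invr_ge0 ltW.
have qx : (n %/ k)%:R * (c j)^-1 <= 1.
  rewrite ler_pdivrMr // mul1r /c ler_nat; exact: hsz.
have := cut_ge0 R n e b j.
nra.
Qed.

End PartE.


Theorem theorem4p4 (R : realType) (n : nat) (e : rel 'I_n) (M : nat)
    (lam : seq R) (sched : seq (op n)) :
  acyclic_graph e ->
  sorted_eigenvalues (laplacian R e) lam ->
  valid_evaluation e M sched ->
  forall k : nat, (1 <= k <= n)%N ->
    ((n %/ k)%:R * (\sum_(i < k) lam`_i) - 2 * k%:R * M%:R <= (io_cost sched)%:R :> R).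
Proof.
move=> _ hs hv k hk.
have n0 : (0 < n)%N by case/andP: hk => h1 h2; exact: leq_trans h1 h2.
have [b [hb hsz hB]] := combB (Compute (Ordinal n0)) hv hk.
have h1 := spec_bound R n e k b hk hsz lam hs.
have h2 : \sum_(j < k) cut R n e b j <= (\sum_(j < k) (#|outS e b j| + #|inS e b j|))%:R.
  by rewrite natr_sum; apply: ler_sum => j _; exact: cut_le.
have h3 : (\sum_(j < k) (#|outS e b j| + #|inS e b j|))%:R <= (io_cost sched + 2 * k * M)%:R :> R.
  by rewrite ler_nat.
move: h3; rewrite natrD !natrM => h3.
have -> : (2%:R : R) = 2 by [].
lra.
Qed.
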